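(* For a period $p\in\mathcal{P}_{KZ}$, $\deg(p)=1$ if and only if $p\in\mathbb{R}_{\mathrm{alg}}^\times$ (i.e. $p$ is a nonzero real algebraic number).
   Context: $\mathbb{R}_{\mathrm{alg}}=\mathbb{R}\cap\overline{\mathbb{Q}}$. Semialgebraic subsets of $\mathbb{R}^n$ are finite unions of finite intersections of sets $\{f=0\}$, $\{g>0\}$ with $f,g\in\mathbb{R}_{\mathrm{alg}}[T_1,\dots,T_n]$; $\mathcal{SA}^n$ denotes those with nonempty interior. A period is a real number $\int_X (P/Q)(x)\,dx$ (absolutely convergent) with $X\in\mathcal{SA}^n$, $P,Q\in\mathbb{R}_{\mathrm{alg}}[T_1,\dots,T_n]$, $Q$ not identically zero on $X$; $\mathcal{P}_{KZ}$ is the set of periods. For a nonzero period $p$ there exists a positive integer $k$ and a compact $K\in\mathcal{SA}^k$ with $|p|=\mathrm{vol}_k(K)$ (Lebesgue measure); the degree $\deg(p)$ is the smallest positive integer $k$ for which such a compact $K\in\mathcal{SA}^k$ exists, and $\deg(0)=0$. *)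

(* Defs.v *)
From HB Require Import structures.
From mathcomp Require Import all_boot all_order all_algebra.
From mathcomp Require Import all_classical all_reals all_analysis.
From mathcomp Require mpoly.
From Stdlib Require Lists.List.

Set Implicit Arguments.
Unset Strict Implicit.
Unset Printing Implicit Defensive.

Import Order.TTheory GRing.Theory Num.Theory.
Import numFieldNormedType.Exports.
Local Open Scope classical_set_scope.
Local Open Scope ring_scope.

Section KZ.
Variable R : realType.

Definition algebraic (x : R) : Prop :=
  exists q : {poly rat}, q != 0 /\ root (map_poly ratr q) x.

Definition pt_eval (n : nat) (P : mpoly.mpoly n R) (x : 'rV[R]_n) : R :=
  mpoly.meval (fun i => x ord0 i) P.

Definition alg_poly (n : nat) (P : mpoly.mpoly n R) : Prop :=
  forall m : mpoly.multinom n, algebraic (mpoly.mcoeff m P).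

(* A semialgebraic description: a finite union (outer seq) of finite
   intersections (inner seqs) of atoms; an atom (true, f) means {f = 0},
   an atom (false, g) means {g > 0}. *)
Definition sa_atom_holds (n : nat) (a : bool * mpoly.mpoly n R)
    (x : 'rV[R]_n) : bool :=
  if a.1 then pt_eval a.2 x == 0 else 0 < pt_eval a.2 x.

Definition sa_set (n : nat) (F : seq (seq (bool * mpoly.mpoly n R)))
  : set 'rV[R]_n :=
  [set x | has (fun c => all (fun a => sa_atom_holds a x) c) F].

Definition semialgebraic (n : nat) (X : set 'rV[R]_n) : Prop :=
  exists F : seq (seq (bool * mpoly.mpoly n R)),
    (forall (c : seq (bool * mpoly.mpoly n R)), Stdlib.Lists.List.In c F ->
       forall (a : bool * mpoly.mpoly n R), Stdlib.Lists.List.In a c -> alg_poly a.2) /\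
    X = sa_set F.

Definition SA (n : nat) (X : set 'rV[R]_n) : Prop :=
  semialgebraic X /\ (interior X !=set0).

(* prepend a coordinate: (x, v) |-> (x, v_1, ..., v_n) in R^(n+1) *)
Definition rcons0 (n : nat) (x : R) (v : 'rV[R]_n) : 'rV[R]_n.+1 :=
  \row_(i < n.+1) (match unlift ord0 i with
                   | Some j => v ord0 j
                   | None => x end).

(* For
   nonnegative measurable functions (in particular for all functions
   below, which are built from semialgebraic sets and rational functions)
   this is the Lebesgue integral on R^n by Tonelli's theorem. *)
Fixpoint iint (n : nat) : ('rV[R]_n -> \bar R) -> \bar R :=
  match n return ('rV[R]_n -> \bar R) -> \bar R with
  | 0 => fun f => f 0
  | n'.+1 => fun f =>
      (\int[lebesgue_measure]_x iint (fun v => f (rcons0 x v)))%E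
  end.

Definition vol (n : nat) (A : set 'rV[R]_n) : \bar R :=
  iint (fun v => (\1_A v)%:E).

(* the integrand P/Q (set to 0 on the null set {Q = 0}) *)
Definition ratfun (n : nat) (P Q : mpoly.mpoly n R) (x : 'rV[R]_n) : R :=
  if pt_eval Q x == 0 then 0 else pt_eval P x / pt_eval Q x.

Definition is_period_integral (n : nat) (X : set 'rV[R]_n)
    (P Q : mpoly.mpoly n R) (p : R) : Prop :=
  let f := fun x => \1_X x * ratfun P Q x in
  (iint (fun x => `|f x|%:E) < +oo)%E /\
  p = fine (iint (fun x => (Num.max (f x) 0)%:E))
      - fine (iint (fun x => (Num.max (- f x) 0)%:E)).

Definition is_period (p : R) : Prop :=
  exists (n : nat) (X : set 'rV[R]_n) (P Q : mpoly.mpoly n R),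
    (0 < n)%N /\ SA X /\ alg_poly P /\ alg_poly Q /\
    (exists x, X x /\ pt_eval Q x != 0) /\
    is_period_integral X P Q p.

Definition deg_admissible (p : R) (k : nat) : Prop :=
  (0 < k)%N /\
  exists K : set 'rV[R]_k, SA K /\ compact K /\ vol K = (`|p|)%:E.

(* deg p : smallest admissible positive k; deg 0 = 0.  (If no admissible
   k existed the value would be 0; for nonzero periods one exists.) *)
Definition deg (p : R) : nat :=
  if pselect (p = 0) then 0%N else
  match pselect (exists k, `[< deg_admissible p k >]) with
  | left H => ex_minn H
  | right _ => 0%N
  end.

End KZ.

(* Main.v *)
Require Import Defs.
From HB Require Import structures.
From mathcomp Require Import all_boot all_order all_algebra.
From mathcomp Require Import all_classical all_reals all_analysis.
From mathcomp Require mpoly.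
Import (canonicals, coercions) mpoly.
Import Order.TTheory GRing.Theory Num.Theory.
Import numFieldNormedType.Exports.
Local Open Scope classical_set_scope.
Local Open Scope ring_scope.

Section Aux.
Variable R : realType.
Implicit Types x y : R.

Lemma algE x : algebraic x <-> algebraicOver (ratr : {rmorphism rat -> R}) x.
Proof. by split => [[q [q0 r]]|[q q0 r]]; exists q. Qed.

Lemma alg_add x y : algebraic x -> algebraic y -> algebraic (x + y).
Proof. by move=> /algE hx /algE hy; apply/algE/algebraic_add. Qed.
Lemma alg_sub x y : algebraic x -> algebraic y -> algebraic (x - y).
Proof. by move=> /algE hx /algE hy; apply/algE/algebraic_sub. Qed.
Lemma alg_mul x y : algebraic x -> algebraic y -> algebraic (x * y).
Proof. by move=> /algE hx /algE hy; apply/algE/algebraic_mul. Qed.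
Lemma alg_opp x : algebraic x -> algebraic (- x).
Proof. by move=> /algE hx; apply/algE/algebraic_opp. Qed.
Lemma alg_nat n : algebraic (n%:R : R).
Proof. by apply/algE; rewrite -(rmorph_nat (ratr : {rmorphism rat -> R})); apply: algebraic_id. Qed.
Lemma alg0 : algebraic (0 : R). Proof. exact: (alg_nat 0). Qed.

Lemma alg_root (q : {poly R}) x : q != 0 -> root q x ->
  (forall i, algebraic q`_i) -> algebraic x.
Proof.
move=> q0 rx hq; apply/algE/integral_algebraic.
apply: (integral_root q0 rx) => z /(nthP 0) [i _ <-].
exact/integral_algebraic/algE.
Qed.

Lemma alg_norm x : algebraic x -> algebraic `|x|.
Proof. by move=> hx; case: (ger0P x) => _; [|apply: alg_opp]. Qed.

Lemma alg_of_norm x : algebraic `|x| -> algebraic x.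
Proof. by case: (ger0P x) => _ // /alg_opp; rewrite opprK. Qed.

End Aux.

Section Poly.
Variable R : realType.
Implicit Types x y : R.

Definition emb x : 'rV[R]_1 := rcons0 x 0.
Lemma emb00 x : emb x ord0 ord0 = x.
Proof. by rewrite /emb /rcons0 mxE unlift_none. Qed.

Definition upoly (P : mpoly.mpoly 1 R) : {poly R} :=
  \sum_(m <- mpoly.msupp P) mpoly.mcoeff m P *: 'X^(mpoly.fun_of_multinom m ord0).

Lemma upolyE P x : (upoly P).[x] = pt_eval P (emb x).
Proof.
rewrite /pt_eval mpoly.mevalE /upoly horner_sum; apply: eq_bigr => m _.
by rewrite hornerZ hornerXn big_ord1 emb00.
Qed.

Lemma upoly_alg P : alg_poly P -> forall i, algebraic (upoly P)`_i.
Proof.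
move=> hP i; rewrite /upoly coef_sum.
apply: (big_ind (fun z : R => algebraic z)) => //.
- exact: alg0.
- exact: alg_add.
move=> m _; rewrite coefZ coefXn; apply: alg_mul => //; exact: alg_nat.
Qed.

Lemma roots_seq (q : {poly R}) : q != 0 -> exists s : seq R, forall x, root q x -> x \in s.
Proof.
have [n le] : exists n, (size q <= n)%N by exists (size q).
elim: n q le => [|n IH] q le q0.
  by move: q0; rewrite -size_poly_eq0; move: le; rewrite leqn0 => ->.
case: (pselect (exists x, root q x)) => [[r /factor_theorem [q' Hq]]|nr]; last first.
  by exists [::] => x rx; exfalso; apply: nr; exists x.
have q'0 : q' != 0 by apply: contraNneq q0 => q'0; rewrite Hq q'0 mul0r.
have hs : size q = (size q').+1.
  by rewrite Hq size_Mmonic ?monicXsubC // size_XsubC addn2.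
have [s Hs] : exists s : seq R, forall x, root q' x -> x \in s.
  by apply: IH q'0; rewrite -ltnS -hs.
exists (r :: s) => x; rewrite Hq rootM root_XsubC inE => /orP [/Hs ->|->]; rewrite ?orbT //.
Qed.

Lemma roots_list (L : seq {poly R}) :
  (forall q, q \in L -> forall i, algebraic q`_i) ->
  exists s : seq R, (forall x, x \in s -> algebraic x) /\
    forall q, q \in L -> q != 0 -> forall x, root q x -> x \in s.
Proof.
elim: L => [|q L IH] hL.
  by exists [::]; split => // q.
have [|sL [HsL1 HsL2]] := IH.
  by move=> q' hq'; apply: hL; rewrite inE hq' orbT.
have hq : forall i, algebraic q`_i by apply: hL; rewrite inE eqxx.
case: (eqVneq q 0) => [q0|q0].
  exists sL; split => // q'; rewrite inE => /orP [/eqP ->|hq']; first by rewrite q0 eqxx.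
  exact: HsL2.
have [s0 Hs0] := roots_seq _ q0.
exists ([seq x <- s0 | root q x] ++ sL); split.
  move=> x; rewrite mem_cat mem_filter => /orP [/andP [rx _]|/HsL1 //].
  exact: (@alg_root _ q x q0 rx hq).
move=> q'; rewrite inE => /orP [/eqP -> _ x rx|hq' q'0 x rx].
  by rewrite mem_cat mem_filter rx Hs0.
by rewrite mem_cat (HsL2 q') ?orbT.
Qed.

End Poly.
Arguments upoly {R}.
Arguments emb {R}.

Section Const.
Variable R : realType.
Implicit Types x y : R.

Lemma pos_const (q : {poly R}) a b x y :
  (forall z, a < z < b -> ~~ root q z) -> a < x < b -> a < y < b -> x <= y ->
  (0 < q.[x]) = (0 < q.[y]).
Proof.
move=> H /andP [ax xb] /andP [ay yb] xy.
have Hz : forall z, x <= z <= y -> ~~ root q z.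
  move=> z /andP [xz zy]; apply: H; apply/andP; split.
    exact: lt_le_trans xz.
  exact: le_lt_trans yb.
have nx : q.[x] != 0 by have := Hz x; rewrite lexx xy /rootE; apply.
have ny : q.[y] != 0 by have := Hz y; rewrite lexx xy andbT; apply.
case: (ltrP 0 q.[x]) => hx; case: (ltrP 0 q.[y]) => hy //.
- have [z hz rz] : exists2 z, x <= z <= y & root (- q) z.
    by apply: poly_ivt xy _; rewrite !hornerN oppr_le0 oppr_ge0 hy ltW.
  by move: (Hz z hz); rewrite -rootN rz.
- have [z hz rz] : exists2 z, x <= z <= y & root q z.
    by apply: poly_ivt xy _; rewrite hx ltW.
  by move: (Hz z hz); rewrite rz.
Qed.

Lemma horner_const (q : {poly R}) a b x y :
  (q != 0 -> forall z, a < z < b -> ~~ root q z) -> a < x < b -> a < y < b ->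
  ((q.[x] == 0) = (q.[y] == 0)) /\ ((0 < q.[x]) = (0 < q.[y])).
Proof.
case: (eqVneq q 0) => [->|q0 /(_ isT) H hx hy]; first by rewrite !horner0.
split.
  have := H x hx; have := H y hy; rewrite /root => /negbTE -> /negbTE -> //.
case: (leP x y) => xy; first exact: pos_const H hx hy xy.
by apply/esym; apply: pos_const H hy hx (ltW xy).
Qed.

End Const.

Lemma count_lt (T : eqType) (p1 p2 : pred T) (s : seq T) z :
  (forall x, p1 x -> p2 x) -> z \in s -> p2 z -> ~~ p1 z ->
  (count p1 s < count p2 s)%N.
Proof.
move=> h12 + h2 h1; elim: s => [//|x s IH]; rewrite inE /= => /orP [/eqP <-|hz].
  rewrite (negbTE h1) h2 add0n add1n ltnS; exact: sub_count.
have := IH hz; have : (p1 x <= p2 x)%N.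
  by case: (boolP (p1 x)) => // /h12 ->.
move=> h h'; by rewrite -addnS leq_add.
Qed.

Section Main.
Variable R : realType.
Variable F : seq (seq (bool * mpoly.mpoly 1 R)).
Variable S : seq R.
Hypothesis hS1 : forall x, x \in S -> algebraic x.
Hypothesis hS2 : forall (c : seq (bool * mpoly.mpoly 1 R)) (a : bool * mpoly.mpoly 1 R), c \in F -> a \in c -> upoly a.2 != 0 ->
  forall x, root (upoly a.2) x -> x \in S.

Definition Kp : set R := [set x | sa_set F (emb x)].

Lemma Kp_const lo hi x y : (forall s, s \in S -> ~~ (lo < s < hi)) ->
  lo < x < hi -> lo < y < hi -> Kp x <-> Kp y.
Proof.
move=> hno hx hy; rewrite /Kp /sa_set /=.
suff -> : has (fun c => all (fun a => sa_atom_holds a (emb x)) c) F =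
          has (fun c => all (fun a => sa_atom_holds a (emb y)) c) F by [].
apply: eq_in_has => c hc; apply: eq_in_all => a ha.
rewrite /sa_atom_holds -!upolyE.
have hq : upoly a.2 != 0 -> forall z, lo < z < hi -> ~~ root (upoly a.2) z.
  move=> q0 z hz; apply/negP => rz.
  by move: (hno z (hS2 c a hc ha q0 z rz)); rewrite hz.
have [h1 h2] := @horner_const R (upoly a.2) lo hi x y hq hx hy.
by rewrite h1 h2.
Qed.




Lemma itvoo_meas lo hi : algebraic lo -> algebraic hi ->
  exists r, algebraic r /\ lebesgue_measure (`]lo, hi[%classic : set R) = r%:E.
Proof.
move=> alo ahi; rewrite lebesgue_measure_itv /=.
case: ifP => _.
  by exists (hi - lo); split; [exact: alg_sub|rewrite EFinB].
by exists 0; split; [exact: alg0|].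
Qed.

Lemma base lo hi : lo < hi -> (forall s, s \in S -> ~~ (lo < s < hi)) ->
  algebraic lo -> algebraic hi ->
  measurable (Kp `&` `]lo, hi]) /\
  exists r, algebraic r /\ lebesgue_measure (Kp `&` `]lo, hi]) = r%:E.
Proof.
move=> lh hno alo ahi.
pose A := Kp `&` `]lo, hi[. pose B := Kp `&` [set hi].
have eAB : Kp `&` `]lo, hi] = A `|` B.
  apply/seteqP; split => x /=.
    move=> [kx]; rewrite in_itv /= => /andP [lx]; rewrite le_eqVlt => /orP [/eqP xe|xh].
      by right; split; rewrite -?xe.
    by left; split => //; rewrite /= in_itv /= lx xh.
  move=> [[kx hx]|[kx xe]].
    by split => //; move: hx; rewrite /= !in_itv /= => /andP [-> /ltW ->].
  have {}xe : x = hi := xe; by subst x; split => //=; rewrite in_itv /= lh lexx.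
have dAB : A `&` B = set0.
  apply/seteqP; split => x //= [[_]] + [_ xe].
  have {}xe : x = hi := xe; subst x.
  by rewrite /= in_itv /= ltxx andbF.
have [mA [rA [arA eA]]] : measurable A /\ exists r, algebraic r /\ lebesgue_measure A = r%:E.
  case: (pselect (exists x0, lo < x0 < hi /\ Kp x0)) => [[x0 [hx0 kx0]]|nx].
    have -> : A = `]lo, hi[%classic.
      apply/seteqP; split => x /=; first by case.
      move=> hx; split => //.
      have hx' : lo < x < hi by move: hx; rewrite /= in_itv.
      by apply/(Kp_const _ _ _ _ hno hx' hx0).
    split; first exact: measurable_itv.
    exact: itvoo_meas.
  have -> : A = set0.
    apply/seteqP; split => x //= [kx hx]; apply: nx; exists x; split => //.
  by split; [exact: measurable0|exists 0; split; [exact: alg0|rewrite measure0]].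
have [mB eB] : measurable B /\ lebesgue_measure B = 0%E.
  case: (pselect (Kp hi)) => kh.
    have -> : B = [set hi] by apply/seteqP; split => x /=; [case|move=> ->].
    by split; [exact: measurable_set1|exact: lebesgue_measure_set1].
  have -> : B = set0 by apply/seteqP; split => x //= [kx xe]; apply: kh; rewrite -xe.
  by split; [exact: measurable0|rewrite measure0].
rewrite eAB; split; first exact: measurableU.
exists rA; split => //; rewrite measureU //.
transitivity (lebesgue_measure A + lebesgue_measure B)%E; first by [].
by rewrite eA eB adde0.
Qed.


Lemma ind (n : nat) (lo hi : R) : (count (fun s : R => ((lo < s) && (s < hi))%R) S <= n)%N ->
  lo < hi -> algebraic lo -> algebraic hi ->
  measurable (Kp `&` `]lo, hi]) /\
  exists r, algebraic r /\ lebesgue_measure (Kp `&` `]lo, hi]) = r%:E.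
Proof.
elim: n lo hi => [|n IH] lo hi hc lh alo ahi.
  apply: base => // s hs; apply/negP => hs'.
  have : (0 < count (fun s : R => ((lo < s) && (s < hi))%R) S)%N.
    by rewrite -has_count; apply/hasP; exists s.
  by move: hc; rewrite leqn0 => /eqP ->.
case: (pselect (exists2 s, s \in S & lo < s < hi)) => [[s hs /andP [ls sh]]|none]; last first.
  apply: base => // s hs; apply/negP => hs'; apply: none; by exists s.
have c1 : (count (fun z : R => ((lo < z) && (z < s))%R) S <= n)%N.
  rewrite -ltnS; apply: leq_trans hc; apply: (@count_lt _ _ _ _ s) => //.
  - by move=> z /andP [-> zs] /=; exact: lt_trans sh.
  - by rewrite ls sh.
  - by rewrite ltxx andbF.
have c2 : (count (fun z : R => ((s < z) && (z < hi))%R) S <= n)%N.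
  rewrite -ltnS; apply: leq_trans hc; apply: (@count_lt _ _ _ _ s) => //.
  - by move=> z /andP [sz ->]; rewrite andbT; exact: lt_trans sz.
  - by rewrite ls sh.
  - by rewrite ltxx.
have [m1 [r1 [ar1 e1]]] := IH lo s c1 ls alo (hS1 s hs).
have [m2 [r2 [ar2 e2]]] := IH s hi c2 sh (hS1 s hs) ahi.
have eU : Kp `&` `]lo, hi] = (Kp `&` `]lo, s]) `|` (Kp `&` `]s, hi]).
  apply/seteqP; split => x /=.
    move=> [kx]; rewrite in_itv /= => /andP [lx xh].
    case: (leP x s) => xs.
      by left; split => //=; rewrite in_itv /= lx xs.
    by right; split => //=; rewrite in_itv /= xs xh.
  move=> [[kx]|[kx]] /=; rewrite /= !in_itv /= => /andP [h1 h2]; split => //=.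
    by rewrite h1 (le_trans h2) // ltW.
  by rewrite h2 andbT (lt_trans ls).
have dU : (Kp `&` `]lo, s]) `&` (Kp `&` `]s, hi]) = set0.
  apply/seteqP; split => x //= [[_]] + [_]; rewrite /= !in_itv /= => /andP [_ xs] /andP [sx _].
  by move: (le_lt_trans xs sx); rewrite ltxx.
rewrite eU; split; first exact: measurableU.
exists (r1 + r2); split; first exact: alg_add.
rewrite measureU //.
transitivity (lebesgue_measure (Kp `&` `]lo, s]) + lebesgue_measure (Kp `&` `]s, hi]))%E; first by [].
by rewrite e1 e2.
Qed.

End Main.
Arguments Kp {R}.

Lemma mem_In (T : eqType) (x : T) (s : seq T) : x \in s -> List.In x s.
Proof. by elim: s => [//|y s IH]; rewrite inE => /orP [/eqP ->|/IH h]; [left|right]. Qed.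

Lemma vol_alg (R : realType) (F : seq (seq (bool * mpoly.mpoly 1 R))) :
  (forall c, List.In c F -> forall a, List.In a c -> alg_poly a.2) ->
  compact (sa_set F) ->
  exists r, algebraic r /\ vol (sa_set F) = r%:E.
Proof.
move=> hF cK.
have hF' : forall (c : seq (bool * mpoly.mpoly 1 R)) a, c \in F -> a \in c -> alg_poly a.2.
  move=> c a /mem_In hc /mem_In ha; exact: hF hc _ ha.
pose L := [seq upoly a.2 | a <- flatten F].
have hL : forall q, q \in L -> forall i, algebraic q`_i.
  move=> q /mapP [a /flattenP [c hc ha] ->]; apply: upoly_alg; exact: hF' ha.
have [S [hS1 hS2]] := @roots_list R L hL.
have hS2' : forall (c : seq (bool * mpoly.mpoly 1 R)) (a : bool * mpoly.mpoly 1 R),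
  c \in F -> a \in c -> upoly a.2 != 0 -> forall x : R, root (upoly a.2) x -> x \in S.
  move=> c a hc ha; apply: hS2; apply: map_f; apply/flattenP; by exists c.
have [N hN] : exists N : nat, forall x, Kp F x -> - N%:R < x <= N%:R.
  pose f := fun v : 'rV[R]_1 => v ord0 ord0.
  have cI : compact (f @` sa_set F).
    apply: continuous_compact => //; apply: continuous_subspaceT.
    exact: coord_continuous.
  have := compact_bounded cI.
  case=> M [_ HM].
  have hM1 : M < `|M| + 1 by apply: le_lt_trans (ler_norm M) _; rewrite ltrDl.
  have HM' := HM _ hM1.
  exists (Num.trunc (`|M| + 1)).+1 => x kx.
  have hx : `|x| <= `|M| + 1.
    by apply: HM'; exists (emb x) => //; rewrite /f emb00.
  have := le_lt_trans hx (truncnS_gt _).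
  by rewrite ltr_norml => /andP [-> /ltW ->].
pose hi : R := N.+1%:R.
have alo : algebraic (- hi) by apply: alg_opp; exact: alg_nat.
have ahi : algebraic hi by exact: alg_nat.
have lh : - hi < hi by rewrite gtrN // ltr0n.
have [mK [r [ar er]]] := @ind R F S hS1 hS2'
  (count (fun s : R => ((- hi < s) && (s < hi))%R) S) (- hi) hi (leqnn _) lh alo ahi.
have eK : Kp F `&` `]- hi, hi] = Kp F.
  apply/seteqP; split => x /=; first by case.
  move=> kx; split => //; have /andP [h1 h2] := hN x kx.
  have hNN : (N%:R : R) <= hi by rewrite ler_nat.
  rewrite /= in_itv /=; apply/andP; split.
    by apply: le_lt_trans h1; rewrite lerN2.
  exact: le_trans hNN.
rewrite eK in mK er.
exists r; split => //; rewrite -er.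
transitivity (\int[lebesgue_measure]_x (\1_(Kp F) x)%:E)%E; first by [].
by rewrite integral_indic // setIT.
Qed.

Section Back.
Variable R : realType.
Variable c : R.
Hypothesis c0 : 0 < c.
Hypothesis ac : algebraic c.

Definition X0 : mpoly.mpoly 1 R := mpoly.mpolyX R (mpoly.mnm1 ord0).
Definition Cc : mpoly.mpoly 1 R := mpoly.mpolyC 1 c.
Definition Fc : seq (seq (bool * mpoly.mpoly 1 R)) :=
  [:: [:: (true, X0)]; [:: (true, Cc - X0)]; [:: (false, X0); (false, Cc - X0)]].
Definition Kc : set 'rV[R]_1 := [set v | forall i, (fun _ => `[0, c]%classic) i (v ord0 i)].

Lemma evX0 v : pt_eval X0 v = v ord0 ord0.
Proof. by rewrite /pt_eval /X0 mpoly.mevalXU. Qed.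
Lemma evC v : pt_eval (Cc - X0) v = c - v ord0 ord0.
Proof. by rewrite /pt_eval mpoly.mevalB mpoly.mevalC mpoly.mevalXU. Qed.

Lemma Kc_sa : Kc = sa_set Fc.
Proof.
apply/seteqP; split => v /=.
- move=> /(_ ord0); rewrite /= in_itv /= => /andP [h1 h2].
  rewrite /sa_set /Fc /sa_atom_holds /= evX0 evC subr_gt0 subr_eq0 andbT.
  rewrite !andbT orbF; move: h1 h2; rewrite !le_eqVlt => /orP [/eqP <-|->] /orP [/eqP ->|->]; rewrite ?eqxx ?orbT //.
- rewrite /sa_set /Fc /sa_atom_holds /= evX0 evC subr_gt0 subr_eq0 !andbT orbF => h i.
  rewrite (ord1 i) /= in_itv /=.
  move: h => /or3P [/eqP ->|/eqP <-|/andP [h1 h2]].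
  + by rewrite lexx ltW.
  + by rewrite lexx ltW.
  + by rewrite ltW // ltW.
Qed.

Lemma Kc_semi : semialgebraic Kc.
Proof.
exists Fc; split; last exact: Kc_sa.
have aX0 : alg_poly X0.
  by move=> m; rewrite /X0 mpoly.mcoeffX; exact: alg_nat.
have aC : alg_poly (Cc - X0).
  move=> m; rewrite mpoly.mcoeffB /Cc mpoly.mcoeffC; apply: alg_sub; last exact: aX0.
  by apply: alg_mul => //; exact: alg_nat.
move=> cl /= [<-|[<-|[<-|[]]]] a /= ; intuition; subst a => //.
Qed.


Lemma Kc_compact : compact Kc.
Proof. by apply: rV_compact => i; exact: segment_compact. Qed.

Lemma Kc_interior : interior Kc !=set0.
Proof.
exists (emb (c / 2)); rewrite /interior.
have hc2 : c / 2 \in `]0, c[.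
  by rewrite in_itv /= divr_gt0 //= ltr_pdivrMr // ltr_pMr // ltr1n.
have hc := @coord_continuous R 1 1 ord0 ord0 (emb (c / 2)).
have hU : nbhs (emb (c / 2) ord0 ord0) (fun y : R => y \in `]0, c[).
  by rewrite emb00; exact: near_in_itv.
have H : nbhs (emb (c / 2)) [set v : 'rV[R]_1 | v ord0 ord0 \in `]0, c[] := hc _ hU.
apply: filterS H => v /=; rewrite in_itv /= => /andP [h1 h2] i.
by rewrite (ord1 i) /= in_itv /= !ltW.
Qed.


Lemma Kc_vol : vol Kc = c%:E.
Proof.
have eK : [set x : R | Kc (emb x)] = `[0, c]%classic.
  apply/seteqP; split => x /=.
    by move=> /(_ ord0); rewrite emb00.
  by move=> hx i; rewrite (ord1 i) emb00.
transitivity (\int[lebesgue_measure]_x (\1_([set x : R | Kc (emb x)]) x)%:E)%E; first by [].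
rewrite eK integral_indic //.
transitivity (lebesgue_measure (`[0, c]%classic : set R)); first by rewrite setIT.
rewrite lebesgue_measure_itv /= lte_fin c0.
by rewrite oppr0 adde0.
Qed.

End Back.

Theorem mainTheorem5 (R : realType) (p : R) :
  is_period p -> (deg p = 1%N <-> (algebraic p /\ p != 0)).
Proof.
move=> _; split.
- rewrite /deg; case: pselect => [//|p0]; case: pselect => [E|//].
  rewrite /=; case: (ex_minnP E) => m hm _ m1; subst m.
  move/asboolP: hm => [_ [K [[[F [hF eK]] _] [cK vK]]]].
  subst K.
  have [r [ar er]] := vol_alg _ _ hF cK.
  have : `|p| = r by move: vK; rewrite er => -[].
  move=> pr; split; first by apply: alg_of_norm; rewrite pr.
  by apply/eqP.
- move=> [ap p0].
  have c0 : 0 < `|p| by rewrite normr_gt0.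
  have ac : algebraic `|p| by exact: alg_norm.
  have adm : deg_admissible p 1.
    split => //; exists (Kc _ `|p|); split; last split.
    + split; [exact: (Kc_semi _ _ c0 ac)|exact: (Kc_interior _ _ c0)].
    + exact: Kc_compact.
    + exact: (Kc_vol _ _ c0).
  rewrite /deg; destruct (pselect (p = 0)) as [p0'|np]; first by rewrite p0' eqxx in p0.
  rewrite /=; destruct (pselect (exists k, `[< deg_admissible p k >])) as [E|E]; last by exfalso; apply: E; exists 1%N; apply/asboolP.
  rewrite /=; case: (ex_minnP E) => m hm hmin.
  have [m0 _] : deg_admissible p m by apply/asboolP.
  have h1 := hmin 1%N (asboolT adm).
  by apply/eqP; rewrite eqn_leq h1 m0.
Qed.
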